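(* Let $P(t)=\sum_{i=0}^d\binom{t+i}{i+1}-\binom{t+i-e_i}{i+1}$ with integers $e_0\ge e_1\ge\dots\ge e_d>0$, and let $n\in\mathbb{N}$ with $n>d=\deg P$. (i) Set $e_i:=0$ for $d+1\le i\le n$ and $a_j:=e_j-e_{j+1}$ for $0\le j\le n-1$. Then $L^P_n=L(a_0,\dots,a_{n-1})=\langle x_0,x_1,\dots,x_{n-(d+2)},\ x_{n-(d+1)}^{a_d+1},\ x_{n-(d+1)}^{a_d}x_{n-d}^{a_{d-1}+1},\ \dots,\ x_{n-(d+1)}^{a_d}x_{n-d}^{a_{d-1}}\cdots x_{n-3}^{a_2}x_{n-2}^{a_1+1},\ x_{n-(d+1)}^{a_d}x_{n-d}^{a_{d-1}}\cdots x_{n-2}^{a_1}x_{n-1}^{a_0}\rangle$. (ii) If there is an integer $0\le\ell\le d-1$ with $a_j=0$ for all $j\le\ell$ and $a_{\ell+1}>0$, then the minimal monomial generators of $L^P_n$ are $m_1,\dots,m_{n-(\ell+1)}$, where $m_i:=x_{i-1}$ for $1\le i\le n-(d+1)$, $m_{n-d+k}:=\big(\prod_{j=0}^{k-1}x_{n-(d+1)+j}^{a_{d-j}}\big)x_{n-(d+1)+k}^{a_{d-k}+1}$ for $0\le k\le d-(\ell+2)$, and $m_{n-(\ell+1)}:=\prod_{j=0}^{d-(\ell+1)}x_{n-(d+1)+j}^{a_{d-j}}$. If $a_0\ne0$, then the minimal monomial generators are those listed in (i).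
   Context: $\Bbbk$ is an algebraically closed field and $\Bbbk[x_0,\dots,x_n]$ the standard graded polynomial ring. Binomial coefficients are polynomials: $\binom{t+a}{b}=\frac{(t+a)\cdots(t+a-b+1)}{b!}$ for $b\ge0$, $0$ for $b<0$. For $a_0,\dots,a_{n-1}\in\mathbb{N}$, $L(a_0,\dots,a_{n-1})$ is the monomial ideal generated by $x_0^{a_{n-1}+1},\ x_0^{a_{n-1}}x_1^{a_{n-2}+1},\ \dots,\ x_0^{a_{n-1}}\cdots x_{n-3}^{a_2}x_{n-2}^{a_1+1},\ x_0^{a_{n-1}}\cdots x_{n-2}^{a_1}x_{n-1}^{a_0}$. Lexicographic order: $x^u>x^v$ if the first nonzero coordinate of $u-v$ is positive. For a homogeneous ideal $I$ with Hilbert function $H$ (of the quotient), $L^H_n$ is the monomial ideal whose degree-$i$ piece is spanned by the $\dim_\Bbbk I_i$ lexicographically largest monomials of degree $i$; the lexicographic ideal $L^P_n$ is the saturation $\bigcup_{j\ge1}\{f: f\langle x_0,\dots,x_n\rangle^j\subseteq L^{H_I}_n\}$ for any homogeneous ideal $I$ whose Hilbert polynomial is $P$ (this is independent of the choice of $I$). *)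

(* Defs.v *)
(* with multinomials' mpoly.  Polynomial ring k[x_0,...,x_n]
   is {mpoly K[n.+1]}; variable x_i is 'X_i with i : 'I_n.+1. *)
From HB Require Import structures.
From mathcomp Require Import all_boot all_order all_algebra.
From mathcomp Require Import mpoly.
Set Implicit Arguments. Unset Strict Implicit. Unset Printing Implicit Defensive.
Import Order.TTheory GRing.Theory Num.Theory.
Local Open Scope ring_scope.

Section Defs.
Variable (K : fieldType) (n : nat).
Local Notation S := {mpoly K[n.+1]}.
Local Notation mon := 'X_{1..n.+1}.

(* the variable x_i, for a natural-number index i (used only with i <= n) *)
Definition xv (i : nat) : S := 'X_(inord i).

Definition homog_of (i : nat) (f : S) : Prop :=
  forall m, m \in msupp f -> mdeg m = i.

Definition hcomp (i : nat) (f : S) : S :=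
  \sum_(m <- msupp f | mdeg m == i) f@_m *: 'X_[m].

Definition is_ideal (I : S -> Prop) : Prop :=
  [/\ I 0, (forall f g, I f -> I g -> I (f + g)) & (forall r f, I f -> I (r * f))].

Definition homog_ideal (I : S -> Prop) : Prop :=
  is_ideal I /\ (forall f, I f -> forall i, I (hcomp i f)).

Definition ideal_gen (G : S -> Prop) (f : S) : Prop :=
  exists s : seq (S * S), (forall p, p \in s -> G p.2) /\
                          f = \sum_(p <- s) p.1 * p.2.

Definition lin_indep (s : seq S) : Prop :=
  forall c : seq K, size c = size s ->
    \sum_(i < size s) c`_i *: s`_i = 0 -> forall i, (i < size s)%N -> c`_i = 0.

Definition dim_is (V : S -> Prop) (D : nat) : Prop :=
  (exists s : seq S, size s = D /\ (forall i, (i < size s)%N -> V s`_i) /\ lin_indep s)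
  /\ (forall s : seq S, (forall i, (i < size s)%N -> V s`_i) -> lin_indep s ->
        (size s <= D)%N).

Definition piece (I : S -> Prop) (i : nat) (f : S) : Prop := I f /\ homog_of i f.

(* Hilbert function of S/I: H_I(i) = dim_k (S/I)_i = dim S_i - dim I_i *)
Definition hilbfun_is (I : S -> Prop) (i h : nat) : Prop :=
  exists dS dI, dim_is (homog_of i) dS /\ dim_is (piece I i) dI /\ h = (dS - dI)%N.

Definition has_hilb_poly (I : S -> Prop) (P : rat -> rat) : Prop :=
  exists i0, forall i, (i0 <= i)%N -> exists h, hilbfun_is I i h /\ h%:R = P i%:R.

Definition lexgt (u v : mon) : bool :=
  [exists k : 'I_n.+1, [forall j : 'I_n.+1, (j < k)%N ==> (u j == v j)] && (v k < u k)%N].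
Definition lexge (u v : mon) : bool := (u == v) || lexgt u v.

Definition lexrank (u : mon) : nat :=
  #|[pred v : 'X_{1..n.+1 < (mdeg u).+1} | (mdeg v == mdeg u) && lexge v u]|.

Definition lex_selected (I : S -> Prop) (u : mon) : Prop :=
  exists D, dim_is (piece I (mdeg u)) D /\ (lexrank u <= D)%N.

(* L^{H_I}_n : the monomial ideal whose degree-i piece is spanned by the selected
   monomials, i.e. f belongs iff every monomial of f is selected *)
Definition lexH (I : S -> Prop) (f : S) : Prop :=
  forall u, u \in msupp f -> lex_selected I u.

Definition maxpow (j : nat) : S -> Prop :=
  ideal_gen (fun g => exists m : mon, mdeg m = j /\ g = 'X_[m]).

(* saturation of L^{H_I}_n ; this is L^P_n when I has Hilbert polynomial P *)
Definition lexsat (I : S -> Prop) (f : S) : Prop :=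
  exists j, (1 <= j)%N /\ forall g, maxpow j g -> lexH I (f * g).

(* L(a_0,...,a_{n-1}): generator number k (0 <= k <= n-1) is
   x_0^{a_{n-1}} ... x_{k-1}^{a_{n-k}} x_k^{a_{n-1-k}+1} for k <= n-2 and
   x_0^{a_{n-1}} ... x_{n-2}^{a_1} x_{n-1}^{a_0} for k = n-1 *)
Definition Lgen (a : nat -> nat) (k : nat) : S :=
  (\prod_(j < k) xv j ^+ a (n.-1 - j)%N) *
  xv k ^+ (a (n.-1 - k)%N + (if (k < n.-1)%N then 1 else 0))%N.

Definition Lideal (a : nat -> nat) : S -> Prop :=
  ideal_gen (fun g => exists2 k, (k < n)%N & g = Lgen a k).

Definition midgen (d : nat) (a : nat -> nat) (k : nat) : S :=
  (\prod_(j < k) xv (n - d.+1 + j) ^+ a (d - j)%N) * xv (n - d.+1 + k) ^+ (a (d - k)%N).+1.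
Definition lastgen (d : nat) (a : nat -> nat) (t : nat) : S :=
  \prod_(j < t.+1) xv (n - d.+1 + j) ^+ a (d - j)%N.

Definition explicit_gens (d : nat) (a : nat -> nat) (g : S) : Prop :=
  (exists2 j, (j < n - d.+1)%N & g = xv j) \/
  (exists2 k, (k < d)%N & g = midgen d a k) \/
  g = lastgen d a d.

Definition min_mon_gen (J : S -> Prop) (u : mon) : Prop :=
  J 'X_[u] /\ forall v : mon, J 'X_[v] -> lem v u -> v = u.

End Defs.

Definition binq (x : rat) (b : nat) : rat :=
  (\prod_(j < b) (x - j%:R)) / (b`!)%:R.

Definition hilbP (d : nat) (e : nat -> nat) (t : rat) : rat :=
  \sum_(i < d.+1) (binq (t + i%:R) i.+1 - binq (t + i%:R - (e i)%:R) i.+1).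

Definition eext (d : nat) (e : nat -> nat) (i : nat) : nat := if (i <= d)%N then e i else 0%N.
Definition adiff (d : nat) (e : nat -> nat) (j : nat) : nat := (eext d e j - eext d e j.+1)%N.

Arguments xv {K n} i.
Arguments homog_of {K n} i f.
Arguments hcomp {K n} i f.
Arguments is_ideal {K n} I.
Arguments homog_ideal {K n} I.
Arguments ideal_gen {K n} G f.
Arguments lin_indep {K n} s.
Arguments dim_is {K n} V D.
Arguments piece {K n} I i f.
Arguments hilbfun_is {K n} I i h.
Arguments has_hilb_poly {K n} I P.
Arguments lexgt {n} u v.
Arguments lexge {n} u v.
Arguments lexrank {n} u.
Arguments lex_selected {K n} I u.
Arguments lexH {K n} I f.
Arguments maxpow {K n} j _.
Arguments lexsat {K n} I f.
Arguments Lgen {K n} a k.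
Arguments Lideal {K n} a _.
Arguments midgen {K n} d a k.
Arguments lastgen {K n} d a t.
Arguments explicit_gens {K n} d a g.
Arguments min_mon_gen {K n} J u.

(* Main.v *)
Require Import Defs.
From HB Require Import structures.
From mathcomp Require Import all_boot all_order all_algebra.
From mathcomp Require Import mpoly.
From mathcomp Require Import ring zify.
From Stdlib Require Import Classical.
Set Implicit Arguments. Unset Strict Implicit. Unset Printing Implicit Defensive.
Import Order.TTheory GRing.Theory Num.Theory.
Local Open Scope ring_scope.
Lemma binq0 (x : rat) : binq x 0 = 1.
Proof. by rewrite /binq big_ord0 fact0 divr1. Qed.

Lemma binqS (x : rat) (b : nat) : binq (x + 1) b.+1 = binq x b.+1 + binq x b.
Proof.
rewrite /binq big_ord_recl big_ord_recr /=.
have -> : \prod_(i < b) (x + 1 - (bump 0 i)%:R) = \prod_(i < b) (x - i%:R).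
  by apply: eq_bigr => i _; rewrite /bump /= add1n -natr1; ring.
set P := \prod_(i < b) (x - i%:R).
rewrite factS natrM.
have h1 : (b.+1%:R : rat) != 0 by rewrite pnatr_eq0.
have h2 : ((b`!)%:R : rat) != 0 by rewrite pnatr_eq0 -lt0n fact_gt0.
rewrite -natr1. field.
by rewrite natr1 h1 h2.
Qed.
Lemma binq_nat_lt (k b : nat) : (k < b)%N -> binq k%:R b = 0.
Proof.
move=> kb; rewrite /binq (bigD1 (Ordinal kb)) //= subrr mul0r mul0r //.
Qed.

Lemma binqR2 (y : rat) (r : nat) :
  \sum_(m < r) binq (y + m%:R) m.+1 = binq (y + r%:R) r - 1.
Proof.
elim: r => [|r IH]; first by rewrite big_ord0 binq0 subrr.
rewrite big_ord_recr /= IH -natr1 addrA binqS; ring.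
Qed.

Lemma binqR3 (y : rat) (r x : nat) :
  \sum_(c < x) binq (y - c%:R + r%:R) r =
  binq (y + r%:R + 1) r.+1 - binq (y + r%:R + 1 - x%:R) r.+1.
Proof.
elim: x => [|x IH]; first by rewrite big_ord0 subr0 subrr.
rewrite big_ord_recr /= IH.
have -> : y + r%:R + 1 - x%:R = (y - x%:R + r%:R) + 1 by ring.
rewrite [binq (y - x%:R + r%:R + 1) _]binqS -natr1.
have -> : y + r%:R + 1 - (x%:R + 1) = y - x%:R + r%:R by ring.
ring.
Qed.

Lemma step_identity (X Z S2 : rat) (r : nat) :
  binq (X + r%:R + 1) r.+1 - binq (X - Z + r%:R + 1) r.+1 + ((binq (X - Z + r%:R) r - 1) - S2)
  = (binq (X + r%:R) r - 1) + binq (X + r%:R) r.+1 - (S2 + binq (X + r%:R - Z) r.+1).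
Proof.
rewrite !binqS.
have -> : X + r%:R - Z = X - Z + r%:R by ring.
ring.
Qed.
Fixpoint comps (r D : nat) : seq (seq nat) :=
  if r is r'.+1 then flatten [seq [seq c :: s | s <- comps r' (D - c)] | c <- iota 0 D.+1]
  else if D == 0%N then [:: [::]] else [::].

Fixpoint lexlt (s t : seq nat) : bool :=
  match s, t with
  | x :: s', y :: t' => (x < y)%N || ((x == y) && lexlt s' t')
  | _, _ => false
  end.

Fixpoint Aof (x : nat -> nat) (r : nat) : seq nat :=
  if r is r'.+1 then x r' :: Aof x r' else [::].

Definition QC (A : seq nat) (D : nat) : nat :=
  count (fun s => lexlt (take (size A) s) A) (comps (size A).+1 D).

Lemma size_Aof x r : size (Aof x r) = r.
Proof. by elim: r => //= r ->. Qed.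

Lemma nth_Aof x r k : (k < r)%N -> nth 0%N (Aof x r) k = x (r.-1 - k)%N.
Proof.
elim: r k => // r IH [|k] /= kr; first by rewrite subn0.
rewrite IH //; congr x; lia.
Qed.

Lemma compsS r D : comps r.+1 D = [seq c :: s | c <- iota 0 D.+1, s <- comps r (D - c)].
Proof. by []. Qed.

Lemma mem_comps r D s : (s \in comps r D) = (size s == r) && (sumn s == D).
Proof.
elim: r D s => [|r IH] D s; first by case: D => [|D] /=; case: s => //=.
rewrite compsS; apply/allpairsPdep/idP.
  move=> [c [s1 [hc hs ->]]]. move: hc; rewrite mem_iota add0n ltnS => cD.
  move: hs; rewrite IH /= eqSS => /andP [-> /eqP ->] /=. by rewrite subnKC.
case: s => [|c s] // /andP [/= hs /= /eqP hD].
exists c, s; split.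
- have h : c \in iota 0 D.+1 by rewrite mem_iota add0n ltnS -hD leq_addr.
  exact: h.
- have h : s \in comps r (D - c) by rewrite IH -eqSS hs /= -hD addKn.
  exact: h.
- by [].
Qed.

Lemma uniq_flatten_head (l : seq nat) (F : nat -> seq (seq nat)) :
  uniq l -> (forall c, uniq (F c)) -> (forall c x, x \in F c -> head 0%N x = c /\ x != [::]) ->
  uniq (flatten (map F l)).
Proof.
move=> ul uF hF; elim: l ul => //= c l IH /andP [cl ul].
rewrite cat_uniq uF IH // andbT /=; apply/hasPn => x /flattenP [y /mapP [c' c'l ->]] hx.
apply/negP => hx'; have [h1 _] := hF _ _ hx; have [h2 _] := hF _ _ hx'.
by move: cl; rewrite -h2 h1 c'l.
Qed.

Lemma uniq_comps r D : uniq (comps r D).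
Proof.
elim: r D => [|r IH] D; first by case: D.
rewrite compsS; apply: uniq_flatten_head.
- exact: iota_uniq.
- by move=> c; rewrite map_inj_uniq // => s1 s2 [].
- by move=> c x /mapP [s' _ ->].
Qed.
Lemma sum_iota_ord (F : nat -> nat) (D : nat) :
  sumn (map F (iota 0 D)) = (\sum_(c < D) F c)%N.
Proof. have -> : iota 0 D = index_iota 0 D by rewrite /index_iota subn0. by rewrite sumnE big_map big_mkord. Qed.

Lemma size_comps_sum r D :
  size (comps r.+1 D) = (\sum_(c < D.+1) size (comps r (D - c)))%N.
Proof.
rewrite compsS size_flatten /shape -map_comp.
rewrite (eq_map (g := fun c => size (comps r (D - c)))); last by move=> c /=; rewrite size_map.
exact: sum_iota_ord.
Qed.

Lemma size_comps r D : ((size (comps r.+1 D))%:R : rat) = binq (D + r)%:R r.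
Proof.
elim: r D => [|r IH] D.
  rewrite size_comps_sum binq0 big_ord_recr /= subnn /= big1 // => c _.
  by case: (D - c)%N (subn_gt0 c D) => [|k]; rewrite ?ltn_ord.
rewrite size_comps_sum natr_sum.
rewrite (eq_bigr (fun c : 'I_D.+1 => binq (D%:R - (c : nat)%:R + r%:R) r)); last first.
  by move=> c _; rewrite IH natrD natrB // -ltnS.
rewrite binqR3 natrD.
have -> : (D%:R + r%:R + 1 - D.+1%:R : rat) = r%:R by rewrite -natr1; ring.
by rewrite binq_nat_lt // subr0 -natr1 addrA.
Qed.
Lemma QC_cons x A D : (x <= D)%N ->
  QC (x :: A) D = (\sum_(c < x) size (comps (size A).+1 (D - c)) + QC A (D - x))%N.
Proof.
move=> xD; rewrite /QC compsS count_flatten -map_comp sum_iota_ord.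
set g := fun c : nat => count (fun s => (c < x)%N || (c == x) && lexlt (take (size A) s) A)
                        (comps (size A).+1 (D - c)).
rewrite (eq_bigr (fun c : 'I_D.+1 => g c)); last by move=> c _; rewrite /= count_map.
rewrite -(big_mkord xpredT g) (@big_cat_nat _ _ _ x) //; last exact: leqW.
have h1 : (\sum_(0 <= i < x) g i)%N = (\sum_(c < x) size (comps (size A).+1 (D - c)))%N.
  rewrite big_mkord; apply: eq_bigr => c _.
  by rewrite /g (eq_count (a2 := predT)) ?count_predT // => s; rewrite ltn_ord.
have h2 : (\sum_(x <= i < D.+1) g i)%N = QC A (D - x).
  rewrite big_ltn ?ltnS // big_nat_cond big1; last first.
    move=> c /andP [/andP [xc _] _]; rewrite /g; apply/eqP; rewrite -leqn0 leqNgt -has_count.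
    by apply/hasPn => s _; rewrite ltnNge ltnW //= gtn_eqF.
  by rewrite addn0 /g ltnn eqxx.
by rewrite h1 h2.
Qed.
Lemma QC_formula (x : nat -> nat) r D : (\sum_(j < r) x j <= D)%N ->
  ((QC (Aof x r) D)%:R : rat) =
  \sum_(m < r) (binq (D%:R + m%:R) m.+1 - binq (D%:R + m%:R - (\sum_(m <= j < r) x j)%N%:R) m.+1).
Proof.
elim: r D => [|r IH] D hD.
  by rewrite big_ord0 /QC (eq_count (a2 := pred0)) ?count_pred0 // => s; rewrite take0.
rewrite big_ord_recr /= in hD.
have xD : (x r <= D)%N by apply: leq_trans hD; exact: leq_addl.
have hD' : (\sum_(j < r) x j <= D - x r)%N by rewrite leq_subRL // addnC.
rewrite [Aof x r.+1]/= QC_cons // size_Aof natrD IH // natr_sum.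
rewrite (eq_bigr (fun c : 'I_(x r) => binq (D%:R - (c : nat)%:R + r%:R) r)); last first.
  move=> c _; rewrite size_comps natrD natrB //; apply: leq_trans xD; exact: ltnW.
rewrite binqR3 natrB //.
rewrite big_ord_recr /= big_nat1 !sumrB !binqR2.
set S2 := \sum_(i < r) binq (D%:R - (x r)%:R + i%:R - (\sum_(i <= j < r) x j)%N%:R) i.+1.
have -> : \sum_(i < r) binq (D%:R + i%:R - (\sum_(i <= j < r.+1) x j)%N%:R) i.+1 = S2.
  apply: eq_bigr => i _; rewrite big_nat_recr /=; last exact: ltnW.
  congr (binq _ _); rewrite natrD; ring.
have -> : (D%:R + r%:R + 1 - (x r)%:R : rat) = D%:R - (x r)%:R + r%:R + 1 by ring.
have := step_identity D%:R (x r)%:R S2 r.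
move=> ->; ring.
Qed.
Lemma nonincr_le (f : nat -> nat) : (forall j, (f j.+1 <= f j)%N) ->
  forall m p, (m <= p)%N -> (f p <= f m)%N.
Proof.
move=> hf m p /subnKC <-; elim: (p - m)%N => [|k IH]; first by rewrite addn0.
by rewrite addnS; apply: leq_trans (hf _) IH.
Qed.

Lemma tele (f : nat -> nat) n m : (forall j, (f j.+1 <= f j)%N) -> (m <= n)%N ->
  (\sum_(m <= j < n) (f j - f j.+1) = f m - f n)%N.
Proof.
move=> hf; elim: n => [|n IH] mn.
  by move: mn; rewrite leqn0 => /eqP ->; rewrite big_geq // subnn.
case: (ltngtP m n.+1) mn => // [mn _|-> _]; last by rewrite big_geq // subnn.
rewrite big_nat_recr //= IH //.
have := @nonincr_le f hf m n mn; have := hf n; lia.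
Qed.

Lemma eext_noninc d e : (forall i, (i < d)%N -> (e i.+1 <= e i)%N) ->
  forall j, (eext d e j.+1 <= eext d e j)%N.
Proof.
move=> he j; rewrite /eext; case: (leqP j.+1 d) => h1; case: (leqP j d) => h2 //.
- exact: he.
- by move: h1 h2; lia.
Qed.

Lemma QC_hilbP d e n D : (forall i, (i < d)%N -> (e i.+1 <= e i)%N) -> (d < n)%N ->
  (e 0 <= D)%N -> ((QC (Aof (adiff d e) n) D)%:R : rat) = hilbP d e D%:R.
Proof.
move=> he dn eD.
have hn := eext_noninc he.
have en0 : eext d e n = 0%N by rewrite /eext leqNgt dn.
have hsum : forall m, (m <= n)%N -> (\sum_(m <= j < n) adiff d e j)%N = eext d e m.
  by move=> m mn; rewrite /adiff tele // en0 subn0.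
rewrite QC_formula; last first.
  by rewrite -(big_mkord xpredT) hsum // /eext leq0n.
rewrite -(big_mkord xpredT (fun m => binq (D%:R + m%:R) m.+1 - binq (D%:R + m%:R - (\sum_(m <= j < n) adiff d e j)%N%:R) m.+1)).
rewrite (@big_cat_nat _ _ _ d.+1) //=.
rewrite [X in _ + X]big_nat_cond [X in _ + X]big1 ?addr0; last first.
  move=> m /andP [/andP [dm mn] _]; rewrite hsum; last exact: ltnW.
  by rewrite /eext leqNgt dm subr0 subrr.
rewrite big_mkord /hilbP; apply: eq_bigr => i _.
rewrite hsum; last by have := ltn_ord i; lia.
by rewrite /eext -ltnS ltn_ord.
Qed.
Section Mono.
Variable (K : fieldType) (n : nat).
Local Notation mon := 'X_{1..n.+1}.
Local Notation S := {mpoly K[n.+1]}.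

Definition cu (u : mon) (k : nat) : nat := nth 0%N (u : seq nat) k.

Lemma cuE (u : mon) (i : 'I_n.+1) : u i = cu u i.
Proof. exact: mnm_nth. Qed.

Lemma inordE (k : nat) : (k <= n)%N -> ((inord k : 'I_n.+1) : nat) = k.
Proof. by move=> kn; rewrite inordK. Qed.

Definition pm (c : nat -> nat) (k : nat) : mon :=
  [multinom (if (i < k)%N then c (i : nat) else 0%N) | i < n.+1].

Lemma prod_xv (c : nat -> nat) k : (k <= n.+1)%N ->
  \prod_(j < k) (xv j : S) ^+ c j = 'X_[pm c k].
Proof.
elim: k => [|k IH] kn.
  rewrite big_ord0 -mpolyX0; congr mpolyX; apply/mnmP => i; by rewrite mnmE mnm0E.
rewrite big_ord_recr /= IH ?(ltnW kn) // /xv mpolyXn -mpolyXD; congr mpolyX.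
apply/mnmP => i; rewrite mnmDE !mnmE mulmnE mnm1E.
have kn' : (k <= n)%N by [].
rewrite -val_eqE /= inordK // ltnS.
case: (ltngtP i k) => h; rewrite ?mul0n ?addn0 ?mul1n ?add0n //.
by rewrite h.
Qed.

Variable a : nat -> nat.
Definition Ak (k : nat) : nat := a (n.-1 - k).
Definition wm (k : nat) : mon :=
  [multinom (if (i < k)%N then Ak i else if (i : nat) == k then (Ak k + (if (k < n.-1)%N then 1 else 0))%N else 0%N) | i < n.+1].

Lemma Lgen_wm k : (k < n)%N -> Lgen a k = 'X_[wm k] :> S.
Proof.
move=> kn; rewrite /Lgen (@prod_xv (fun j => a (n.-1 - j)) k); last by apply: leq_trans (ltnW kn) _.
rewrite /xv mpolyXn -mpolyXD; congr mpolyX.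
apply/mnmP => i; rewrite mnmDE !mnmE mulmnE mnm1E -val_eqE /= inordK; last exact: ltnW.
rewrite /Ak; case: (ltngtP i k) => h; rewrite ?mul0n ?addn0 ?mul1n ?add0n //.
Qed.


Lemma cu_inord (u : mon) (i : nat) : (i <= n)%N -> u (inord i) = cu u i.
Proof. by move=> hi; rewrite cuE inordK. Qed.

Lemma lemP (v u : mon) : lem v u <-> (forall i, (i <= n)%N -> (cu v i <= cu u i)%N).
Proof.
split.
  by move=> /mnm_lepP h i hi; rewrite -!cu_inord //; apply: h.
move=> h; apply/mnm_lepP => i; rewrite !cuE; apply: h; rewrite -ltnS; exact: ltn_ord.
Qed.

Lemma cu_wm k i : (i <= n)%N -> cu (wm k) i =
  (if (i < k)%N then Ak i else if i == k then (Ak k + (if (k < n.-1)%N then 1 else 0))%N else 0%N).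
Proof. by move=> hi; rewrite -cu_inord // mnmE inordK. Qed.

Definition inL (u : mon) : bool := [exists k : 'I_n, lem (wm k) u].

Definition ltAc (u : mon) : Prop :=
  exists k, [/\ (k < n)%N, (forall j, (j < k)%N -> cu u j = Ak j) & (cu u k < Ak k)%N].

Lemma inLP (u : mon) : (0 < n)%N -> inL u <-> ~ ltAc u.
Proof.
move=> n0; split.
  move=> /existsP [k /lemP hk] [k' [k'n hj hlt]].
  have k'n' : (k' <= n)%N by apply: ltnW.
  have := hk k' k'n'; rewrite cu_wm //.
  case: (ltngtP k' k) => h.
  - by move=> h2; move: (leq_ltn_trans h2 hlt); rewrite ltnn.
  - move=> _; have hkn : (k <= n)%N by apply: ltnW; exact: ltn_ord.
    have := hk k hkn; rewrite cu_wm // ltnn eqxx hj //.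
    have -> : (k < n.-1)%N by move: h k'n; lia.
    lia.
  - rewrite h in hlt *; move=> h2; have := leq_trans (leq_addr _ _) h2; lia.
move=> hn.
case: (boolP [exists k : 'I_n, cu u k != Ak k]) => [hex|]; last first.
  move=> /existsPn hall.
  have heq : forall k, (k < n)%N -> cu u k = Ak k.
    by move=> k kn; have := hall (Ordinal kn); rewrite negbK => /eqP.
  have hp : (n.-1 < n)%N by rewrite ltn_predL.
  apply/existsP; exists (Ordinal hp); apply/lemP => i hi; rewrite cu_wm //=.
  have -> : (n.-1 < n.-1)%N = false by rewrite ltnn.
  case: (ltngtP i n.-1) => h; rewrite ?addn0.
  - by rewrite heq //; apply: leq_trans h _; exact: leq_pred.
  - by [].
  - by rewrite h heq // ltn_predL.
have hex' : exists k, (k < n)%N && (cu u k != Ak k).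
  by move: hex => /existsP [k hk]; exists k; rewrite ltn_ord.
case: (ex_minnP hex') => k0 /andP [k0n hne] hmin.
have hbef : forall j, (j < k0)%N -> cu u j = Ak j.
  move=> j jk; apply/eqP; have := hmin j; rewrite (ltn_trans jk k0n) /=.
  by case: eqP => // _ /(_ isT); rewrite leqNgt jk.
have hgt : (Ak k0 < cu u k0)%N.
  rewrite ltn_neqAle eq_sym hne /= leqNgt; apply/negP => hlt; apply: hn; exists k0; split=> //.
apply/existsP; exists (Ordinal k0n); apply/lemP => i hi; rewrite cu_wm //=.
case: (ltngtP i k0) => h.
- by rewrite hbef.
- by [].
- rewrite h; case: (k0 < n.-1)%N; rewrite ?addn0 ?addn1 //; exact: ltnW.
Qed.
Definition lexgtc (v u : mon) : Prop :=
  exists k, [/\ (k <= n)%N, (forall j, (j < k)%N -> cu v j = cu u j) & (cu u k < cu v k)%N].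

Lemma lexgtP (v u : mon) : lexgt v u <-> lexgtc v u.
Proof.
split.
  move=> /existsP [k /andP [/forallP hall hlt]]; exists k; split.
  - by rewrite -ltnS.
  - move=> j jk; have jn : (j <= n)%N by apply: leq_trans (ltnW jk) _; rewrite -ltnS.
    have := hall (inord j); rewrite inordK ?ltnS // jk /= -!cu_inord //.
    by move/eqP.
  - by rewrite -!cuE.
move=> [k [kn hj hlt]]; apply/existsP; exists (Ordinal (n:=n.+1) (m:=k) kn).
rewrite /= !cuE hlt andbT; apply/forallP => j; apply/implyP => jk.
by rewrite !cuE hj.
Qed.

Lemma lexgt_irr (u : mon) : ~ lexgtc u u.
Proof. by move=> [k [_ _ h]]; rewrite ltnn in h. Qed.

Lemma ltA_lexgt (v u : mon) : ltAc v -> lexgtc v u -> ltAc u.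
Proof.
move=> [k [kn hv hvk]] [k' [k'n hvu hk']].
case: (ltngtP k' k) => h.
- exists k'; split.
  + exact: ltn_trans h kn.
  + by move=> j jk'; rewrite -hvu // hv //; apply: ltn_trans jk' h.
  + by rewrite -(hv _ h).
- exists k; split => //.
  + by move=> j jk; rewrite -hvu ?hv //; apply: ltn_trans jk h.
  + by rewrite -hvu.
- exists k; split => //.
  + by move=> j jk; rewrite -hvu ?hv // h.
  + by rewrite -h; apply: ltn_trans hk' _; rewrite h.
Qed.

Lemma ltA_notltA (u v : mon) : ltAc u -> ~ ltAc v -> lexgtc v u.
Proof.
move=> [k [kn hu huk]] hv.
case: (boolP [exists j : 'I_k.+1, cu v j != cu u j]) => [hex|]; last first.
  move=> /existsPn hall; exfalso; apply: hv; exists k; split => //.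
  + move=> j jk; have := hall (Ordinal (ltn_trans jk (ltnSn k))); rewrite negbK /= => /eqP ->.
    exact: hu.
  + by have := hall (Ordinal (ltnSn k)); rewrite negbK /= => /eqP ->.
have hex' : exists j, (j <= k)%N && (cu v j != cu u j).
  by move: hex => /existsP [j hj]; exists j; rewrite -ltnS ltn_ord.
case: (ex_minnP hex') => j0 /andP [j0k hne] hmin.
have hbef : forall j, (j < j0)%N -> cu v j = cu u j.
  move=> j jj; apply/eqP; have := hmin j; rewrite (leq_trans (ltnW jj) j0k) /=.
  by case: eqP => // _ /(_ isT); rewrite leqNgt jj.
exists j0; split.
- by apply: leq_trans j0k _; apply: ltnW.
- exact: hbef.
- rewrite ltn_neqAle eq_sym hne /= leqNgt; apply/negP => hlt; apply: hv.
  move: j0k; rewrite leq_eqVlt => /orP [/eqP e0|j0k].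
  + exists k; split => //.
    * by move=> j jk; rewrite hbef ?e0 // hu.
    * by rewrite -e0; apply: ltn_trans hlt _; rewrite e0.
  + exists j0; split.
    * exact: ltn_trans j0k kn.
    * by move=> j jj; rewrite hbef // hu //; apply: ltn_trans jj j0k.
    * by rewrite -hu.
Qed.
Lemma coefMX_notle (p : S) (w m : mon) : ~~ lem w m -> (p * 'X_[w])@_m = 0.
Proof.
move=> hwm; apply: memN_msupp_eq0; apply/negP => hm.
have := perm_mem (msuppMX p w); move/(_ m); rewrite hm => /esym /mapP [m' _ hm'].
by move: hwm; rewrite hm' lem_addr.
Qed.

Lemma supp_MX (p : S) (w m : mon) : m \in msupp (p * 'X_[w]) -> lem w m.
Proof.
move=> hm; apply/negPn/negP => h; move: hm; rewrite mcoeff_msupp coefMX_notle //.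
by rewrite eqxx.
Qed.

Lemma ideal_gen_supp (G : S -> Prop) (Q : mon -> Prop) (f : S) :
  (forall g, G g -> exists2 w, Q w & g = 'X_[w]) -> ideal_gen G f ->
  forall m, m \in msupp f -> exists2 w, Q w & lem w m.
Proof.
move=> hG [s [hs ->]]; elim: s hs => [|p s IH] hs m.
  by rewrite big_nil mcoeff_msupp mcoeff0 eqxx.
rewrite big_cons => /msuppD_le; rewrite mem_cat => /orP [hm|hm]; last first.
  by apply: IH => // q hq; apply: hs; rewrite inE hq orbT.
have [w hw hp2] := hG _ (hs p (mem_head _ _)).
by exists w => //; apply: (@supp_MX p.1); rewrite -hp2.
Qed.

Lemma ideal_gen_0 (G : S -> Prop) : ideal_gen G 0.
Proof. by exists [::]; rewrite big_nil. Qed.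

Lemma ideal_gen_add (G : S -> Prop) f g : ideal_gen G f -> ideal_gen G g -> ideal_gen G (f + g).
Proof.
move=> [s [hs ->]] [t [ht ->]]; exists (s ++ t); split; last by rewrite big_cat.
by move=> p; rewrite mem_cat => /orP [/hs|/ht].
Qed.

Lemma ideal_gen_mul (G : S -> Prop) r f : ideal_gen G f -> ideal_gen G (r * f).
Proof.
move=> [s [hs ->]]; exists [seq (r * p.1, p.2) | p <- s]; split.
  by move=> q /mapP [p hp ->]; exact: (hs p hp).
by rewrite big_map mulr_sumr; apply: eq_bigr => p _; rewrite mulrA.
Qed.

Lemma ideal_gen_sum (G : S -> Prop) (r : seq mon) (c : mon -> K) :
  (forall m, m \in r -> exists w, G 'X_[w] /\ lem w m) ->
  ideal_gen G (\sum_(m <- r) c m *: 'X_[m]).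
Proof.
elim: r => [|m r IH] h; first by rewrite big_nil; exact: ideal_gen_0.
rewrite big_cons; apply: ideal_gen_add; last by apply: IH => m' hm'; apply: h; rewrite inE hm' orbT.
have [w [hw hwm]] := h m (mem_head _ _).
exists [:: (c m *: 'X_[m - w], 'X_[w])]; split.
  by move=> p; rewrite inE => /eqP ->.
by rewrite big_seq1 /= -scalerAl -mpolyXD submK.
Qed.

Lemma ideal_gen_of_supp (G : S -> Prop) (f : S) :
  (forall m, m \in msupp f -> exists w, G 'X_[w] /\ lem w m) -> ideal_gen G f.
Proof. by move=> h; rewrite (mpolyE f); apply: ideal_gen_sum. Qed.

Lemma LidealP (f : S) : Lideal a f <-> (forall m, m \in msupp f -> inL m).
Proof.
split.
  move=> hf m hm.
  have := @ideal_gen_supp _ (fun w => exists k : 'I_n, w = wm k) f _ hf m hm.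
  case.
    move=> g [k kn ->]; exists (wm k); first by exists (Ordinal kn).
    exact: Lgen_wm.
  by move=> w [k ->] hw; apply/existsP; exists k.
move=> h; apply: ideal_gen_of_supp => m hm.
have /existsP [k hk] := h m hm; exists (wm k); split => //.
by exists k => //; rewrite Lgen_wm.
Qed.

Lemma hcomp_supp (i : nat) (f : S) m : m \in msupp (hcomp i f) -> m \in msupp f.
Proof.
apply: contraLR => hm; rewrite mcoeff_msupp negbK /hcomp raddf_sum /=.
apply/eqP; rewrite big_seq_cond big1 // => m' /andP [hm' _].
rewrite mcoeffZ mcoeffX; case: eqP => [e|_]; last by rewrite mulr0.
by move: hm; rewrite -e hm'.
Qed.

Lemma Lideal_homog : homog_ideal (Lideal a : S -> Prop).
Proof.
split; first split.
- exact: ideal_gen_0.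
- exact: ideal_gen_add.
- move=> r f; exact: ideal_gen_mul.
- move=> f /LidealP hf i; apply/LidealP => m /hcomp_supp; exact: hf.
Qed.
Lemma dim_unique (V : S -> Prop) D1 D2 : dim_is V D1 -> dim_is V D2 -> D1 = D2.
Proof.
move=> [[s1 [h1 [hs1 hl1]]] hu1] [[s2 [h2 [hs2 hl2]]] hu2].
apply/eqP; rewrite eqn_leq; apply/andP; split; [rewrite -h1; exact: (hu2 _ hs1 hl1)|rewrite -h2; exact: (hu1 _ hs2 hl2)].
Qed.

Lemma dimB (V : S -> Prop) (B : seq mon) : uniq B ->
  (forall f, V f <-> {subset msupp f <= B}) -> dim_is V (size B).
Proof.
move=> uB hV; split.
  exists [seq 'X_[m] | m <- B]; split; first by rewrite size_map.
  split.
    move=> i; rewrite size_map => hi; rewrite (nth_map 0%MM) //; apply/hV.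
    by move=> m; rewrite msuppX inE => /eqP ->; exact: mem_nth.
  move=> c; rewrite size_map => hc hsum i hi.
  have := congr1 (mcoeff (nth 0%MM B i)) hsum; rewrite mcoeff0 raddf_sum /=.
  rewrite (bigD1 (Ordinal hi)) //= big1 ?addr0.
    by rewrite mcoeffZ (nth_map 0%MM) // mcoeffX eqxx mulr1.
  move=> j hj; rewrite mcoeffZ (nth_map 0%MM) // mcoeffX nth_uniq //.
  by rewrite -val_eqE /= in hj; rewrite (negbTE hj) mulr0.
move=> s hs hli.
pose M : 'M[K]_(size s, size B) := \matrix_(i, j) (s`_i)@_(nth 0%MM B j).
have hker : forall v : 'rV_(size s), v *m M = 0 -> v = 0.
  move=> v hv.
  pose c := [seq v 0 i | i <- enum 'I_(size s)].
  have hc : forall i : 'I_(size s), c`_i = v 0 i.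
    by move=> i; rewrite (nth_map i) ?size_enum_ord // nth_ord_enum.
  have hP : \sum_(i < size s) c`_i *: s`_i = 0.
    apply/mpolyP => mm; rewrite mcoeff0 raddf_sum /=.
    case: (boolP (mm \in B)) => hmm.
      have hidx : (index mm B < size B)%N by rewrite index_mem.
      have := congr1 (fun A : 'rV[K]_(size B) => A 0 (Ordinal hidx)) hv.
      rewrite !mxE => h0; apply: etrans h0.
      apply: eq_bigr => i _; rewrite mcoeffZ hc mxE /= nth_index //.
    rewrite big1 // => i _; rewrite mcoeffZ.
    have -> : (s`_i)@_mm = 0; last by rewrite mulr0.
    apply: memN_msupp_eq0; apply: contra hmm; apply: (proj1 (hV _)); exact: hs.
  have hsz : size c = size s by rewrite size_map size_enum_ord.
  have hc0 := hli c hsz hP.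
  apply/rowP => i; rewrite mxE -hc; exact: hc0.
have hrf : row_free M.
  rewrite -kermx_eq0; apply/eqP/row_matrixP => i; rewrite row0; apply: hker.
  apply/sub_kermxP; exact: row_sub.
by move: hrf; rewrite /row_free => /eqP <-; exact: rank_leq_col.
Qed.
Lemma lexltP (s t : seq nat) : reflect
  (exists k, [/\ (k < minn (size s) (size t))%N,
     (forall j, (j < k)%N -> nth 0%N s j = nth 0%N t j) & (nth 0%N s k < nth 0%N t k)%N])
  (lexlt s t).
Proof.
elim: s t => [|x s IH] [|y t] /=; try by constructor => -[k []]; rewrite ?minn0 ?min0n.
apply: (iffP orP).
  case=> [hxy|/andP [/eqP exy /IH [k [hk hj hlt]]]].
    by exists 0%N; split => //; rewrite minnSS.
  exists k.+1; split => //; first by rewrite minnSS ltnS.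
  by case=> [|j] //= /hj.
case=> -[|k] [hk hj hlt] /=; first by left.
right; have := hj 0%N isT => /= ->; rewrite eqxx /=; apply/IH; exists k; split => //.
- by move: hk; rewrite minnSS ltnS.
- by move=> j jk; apply: (hj j.+1).
Qed.

Definition ml (u : mon) : seq nat := u.

Lemma size_ml (u : mon) : size (ml u) = n.+1.
Proof. by rewrite /ml size_tuple. Qed.

Lemma inL_lex (u : mon) : (0 < n)%N -> inL u = ~~ lexlt (take n (ml u)) (Aof a n).
Proof.
move=> n0; apply/idP/idP.
  move/(inLP u n0) => h; apply/negP => /lexltP [k [hk hj hlt]]; apply: h.
  have kn : (k < n)%N by move: hk; rewrite size_takel ?size_ml // size_Aof minnn.
  exists k; split => //.
  + move=> j jk; have := hj j jk; rewrite nth_take ?(ltn_trans jk kn) // nth_Aof //.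
    exact: ltn_trans jk kn.
  + by move: hlt; rewrite nth_take // nth_Aof.
move=> h; apply/(inLP u n0) => -[k [kn hj hlt]]; move/negP: h; apply; apply/lexltP.
exists k; split.
- by rewrite size_takel ?size_ml // size_Aof minnn.
- move=> j jk; rewrite nth_take ?(ltn_trans jk kn) // nth_Aof ?(ltn_trans jk kn) //.
  exact: hj.
- by rewrite nth_take // nth_Aof.
Qed.

Definition Bp (p : pred mon) (D : nat) : seq mon :=
  [seq bmnm v | v <- enum {: 'X_{1..n.+1 < D.+1}} & (mdeg (bmnm v) == D) && p (bmnm v)].

Lemma uniq_Bp p D : uniq (Bp p D).
Proof. rewrite map_inj_uniq ?filter_uniq ?enum_uniq //; last by move=> x y h; exact: val_inj. by rewrite -enumT enum_uniq. Qed.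

Lemma mem_Bp p D m : (m \in Bp p D) = (mdeg m == D) && p m.
Proof.
apply/mapP/idP.
  by move=> [v]; rewrite mem_filter => /andP [h _] ->.
move=> /andP [/eqP hD hp].
have hb : (mdeg m < D.+1)%N by rewrite hD.
by exists (BMultinom hb) => //; rewrite mem_filter /= hD eqxx hp /= mem_enum.
Qed.

Lemma size_Bp p D : size (Bp p D) =
  count (fun v : 'X_{1..n.+1 < D.+1} => (mdeg (bmnm v) == D) && p (bmnm v)) (enum {: 'X_{1..n.+1 < D.+1}}).
Proof. by rewrite size_map size_filter. Qed.

Lemma count_split (T : Type) (P Q : pred T) (s : seq T) :
  count (fun x => P x && true) s = (count (fun x => P x && Q x) s + count (fun x => P x && ~~ Q x) s)%N.
Proof.
elim: s => //= x s ->; case: (P x); case: (Q x) => /=; rewrite ?add0n ?add1n ?addSn ?addnS //.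
Qed.

Lemma size_Bp_split D : size (Bp predT D) = (size (Bp inL D) + size (Bp (predC inL) D))%N.
Proof. rewrite !size_Bp; exact: (count_split (fun v : 'X_{1..n.+1 < D.+1} => mdeg (bmnm v) == D) (fun v => inL (bmnm v))). Qed.
Lemma homog_B D (f : S) : homog_of D f <-> {subset msupp f <= Bp predT D}.
Proof.
split.
  by move=> h m hm; rewrite mem_Bp andbT (h m hm) eqxx.
by move=> h m hm; have := h m hm; rewrite mem_Bp andbT => /eqP.
Qed.

Lemma pieceL_B D (f : S) : piece (Lideal a) D f <-> {subset msupp f <= Bp inL D}.
Proof.
split.
  move=> [/LidealP hL hh] m hm; rewrite mem_Bp (hh m hm) eqxx /=; exact: hL.
move=> h; split.
  apply/LidealP => m hm; have := h m hm; rewrite mem_Bp => /andP [_ ->] //.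
by move=> m hm; have := h m hm; rewrite mem_Bp => /andP [/eqP -> _].
Qed.

Lemma dim_homog D : dim_is (homog_of D : S -> Prop) (size (Bp predT D)).
Proof. apply: dimB; [exact: uniq_Bp|exact: homog_B]. Qed.

Lemma dim_pieceL D : dim_is (piece (Lideal a) D : S -> Prop) (size (Bp inL D)).
Proof. apply: dimB; [exact: uniq_Bp|exact: pieceL_B]. Qed.

Lemma ml_inj : injective ml.
Proof. by move=> u v h; apply: val_inj; apply: val_inj. Qed.

Lemma sumn_ml (u : mon) : sumn (ml u) = mdeg u.
Proof. by rewrite sumnE. Qed.

Lemma count_comps (r : pred (seq nat)) D :
  count (fun v : 'X_{1..n.+1 < D.+1} => (mdeg (bmnm v) == D) && r (ml (bmnm v))) (enum {: 'X_{1..n.+1 < D.+1}})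
  = count r (comps n.+1 D).
Proof.
set L := [seq v <- enum {: 'X_{1..n.+1 < D.+1}} | mdeg (bmnm v) == D].
have hp : perm_eq [seq ml (bmnm v) | v <- L] (comps n.+1 D).
  apply: uniq_perm.
  - rewrite map_inj_uniq ?filter_uniq //; first by rewrite -enumT enum_uniq.
    by move=> x y /ml_inj h; apply: val_inj.
  - exact: uniq_comps.
  move=> s; rewrite mem_comps; apply/mapP/idP.
    move=> [v]; rewrite mem_filter => /andP [/eqP hD _] ->.
    by rewrite size_ml sumn_ml hD !eqxx.
  move=> /andP [hs /eqP hD].
  pose t : n.+1.-tuple nat := Tuple hs.
  have hb : (mdeg (Multinom t) < D.+1)%N by rewrite -sumn_ml /ml /= hD.
  exists (BMultinom hb) => //; rewrite mem_filter -sumn_ml /ml /= hD eqxx /=.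
  exact: mem_enum.
rewrite -((permP hp) r) [RHS]count_map [RHS]count_filter; apply: eq_count => v /=.
by rewrite andbC.
Qed.

Lemma size_BpC D : (0 < n)%N -> size (Bp (predC inL) D) = QC (Aof a n) D.
Proof.
move=> n0; rewrite size_Bp /QC size_Aof -count_comps; apply: eq_count => v /=.
by rewrite inL_lex // negbK.
Qed.
Lemma card_count (T : finType) (P : pred T) : #|[pred x | P x]| = count P (enum T).
Proof. by rewrite enumT cardE /enum_mem size_filter. Qed.

Lemma count_lt (T : eqType) (a1 a2 : pred T) (s : seq T) (x0 : T) :
  subpred a1 a2 -> x0 \in s -> a2 x0 -> ~~ a1 x0 -> (count a1 s < count a2 s)%N.
Proof.
move=> hsub; elim: s => // y s IH; rewrite inE => /orP [/eqP <-|hx] h2 h1 /=.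
  by rewrite h2 (negbTE h1) add0n add1n ltnS sub_count.
have h3 := IH hx h2 h1.
have h4 : (a1 y <= a2 y)%N by case: (boolP (a1 y)) => h //; rewrite (hsub y h).
move: h3 h4; lia.
Qed.

Lemma notinL_ltA (u : mon) : (0 < n)%N -> ~~ inL u -> ltAc u.
Proof. by move=> n0 h; apply: NNPP => hn; move/negP: h; apply; apply/inLP. Qed.

Lemma inL_lexge (u v : mon) : (0 < n)%N -> inL u -> lexge v u -> inL v.
Proof.
move=> n0 hu /orP [/eqP e|/lexgtP hgt]; first by rewrite e.
case: (boolP (inL v)) => // hv; exfalso.
have := (proj1 (inLP u n0)) hu; apply.
exact: ltA_lexgt (notinL_ltA n0 hv) hgt.
Qed.

Lemma lexgt_inL (u v : mon) : (0 < n)%N -> ~~ inL u -> inL v -> lexgt v u.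
Proof.
move=> n0 hu hv; apply/lexgtP; apply: ltA_notltA (notinL_ltA n0 hu) _.
exact/inLP.
Qed.

Lemma lexrank_count (u : mon) : lexrank u =
  count (fun v : 'X_{1..n.+1 < (mdeg u).+1} => (mdeg (bmnm v) == mdeg u) && lexge (bmnm v) u)
        (enum {: 'X_{1..n.+1 < (mdeg u).+1}}).
Proof. by rewrite /lexrank card_count. Qed.

Lemma lexrank_inL (u : mon) : (0 < n)%N -> inL u -> (lexrank u <= size (Bp inL (mdeg u)))%N.
Proof.
move=> n0 hu; rewrite lexrank_count size_Bp; apply: sub_count => v /andP [-> h] /=.
exact: inL_lexge hu h.
Qed.

Lemma lexrank_notinL (u : mon) : (0 < n)%N -> ~~ inL u -> (size (Bp inL (mdeg u)) < lexrank u)%N.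
Proof.
move=> n0 hu; rewrite lexrank_count size_Bp.
have hb : (mdeg u < (mdeg u).+1)%N by [].
apply: (@count_lt _ _ _ _ (BMultinom hb)).
- move=> v /andP [-> h] /=; rewrite /lexge (lexgt_inL n0 hu h) orbT //.
- exact: mem_enum.
- by rewrite /= eqxx /lexge eqxx.
- by rewrite /= negb_and hu orbT.
Qed.
Lemma Lgen_split (d : nat) : (d < n)%N -> (forall j, (d < j)%N -> a j = 0%N) ->
  forall k, (k <= d)%N ->
  Lgen a (n - d.+1 + k) = (\prod_(i < k) (xv (n - d.+1 + i) : S) ^+ a (d - i)) *
                          (xv (n - d.+1 + k) : S) ^+ (a (d - k) + (if (k < d)%N then 1 else 0)).
Proof.
move=> dn ha k kd; rewrite /Lgen big_split_ord /=.
rewrite [X in X * _ * _]big1 ?mul1r; last first.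
  move=> i _; rewrite ha ?expr0 //; have := ltn_ord i; lia.
have hb : (n.-1 - (n - d.+1 + k) = d - k)%N by lia.
have hc : ((n - d.+1 + k < n.-1)%N = (k < d)%N) by apply/idP/idP; lia.
rewrite hb hc; congr (_ * _); apply: eq_bigr => i _; congr (_ ^+ _).
congr a; lia.
Qed.

Lemma Lgen_xv (d : nat) : (d < n)%N -> (forall j, (d < j)%N -> a j = 0%N) ->
  forall j, (j < n - d.+1)%N -> Lgen a j = xv j :> S.
Proof.
move=> dn ha j jb; rewrite /Lgen big1 ?mul1r; last first.
  move=> i _; rewrite ha ?expr0 //; have := ltn_ord i; lia.
rewrite ha; last by lia.
have -> : (j < n.-1)%N by lia.
by rewrite add0n expr1.
Qed.

Lemma Lgen_mid (d : nat) : (d < n)%N -> (forall j, (d < j)%N -> a j = 0%N) ->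
  forall k, (k < d)%N -> Lgen a (n - d.+1 + k) = midgen d a k :> S.
Proof.
move=> dn ha k kd; rewrite Lgen_split // ?(ltnW kd) // kd addn1 //.
Qed.

Lemma Lgen_last (d : nat) : (d < n)%N -> (forall j, (d < j)%N -> a j = 0%N) ->
  Lgen a n.-1 = lastgen d a d :> S.
Proof.
move=> dn ha; have -> : n.-1 = (n - d.+1 + d)%N by lia.
rewrite Lgen_split // ltnn addn0 /lastgen big_ord_recr //.
Qed.

Lemma lastgen_trunc (d l : nat) : (l < d)%N -> (forall j, (j <= l)%N -> a j = 0%N) ->
  lastgen d a d = lastgen d a (d - l.+1) :> S.
Proof.
move=> ld ha; rewrite /lastgen -!(big_mkord xpredT (fun j => (xv (n - d.+1 + j) : S) ^+ a (d - j))).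
rewrite (@big_cat_nat _ _ _ (d - l.+1).+1) //=; last by lia.
rewrite [X in _ * X]big_nat_cond [X in _ * X]big1 ?mulr1 // => i /andP [/andP [h1 h2] _].
by rewrite ha ?expr0 //; lia.
Qed.
Lemma lem_anti (u v : mon) : lem u v -> lem v u -> u = v.
Proof.
move=> /mnm_lepP h1 /mnm_lepP h2; apply/mnmP => i; apply/eqP; rewrite eqn_leq h1 h2 //.
Qed.

Lemma lem_trans (u v w : mon) : lem u v -> lem v w -> lem u w.
Proof. move=> h1 h2; exact: (lepm_trans h1 h2). Qed.

Lemma mingen_iff (J : S -> Prop) : (forall v : mon, J 'X_[v] <-> inL v) ->
  forall u, min_mon_gen J u <->
    (exists k : 'I_n, u = wm k /\ forall k' : 'I_n, lem (wm k') (wm k) -> wm k' = wm k).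
Proof.
move=> hJ u; split.
  move=> [/hJ hu hmin]; have /existsP [k hk] := hu.
  have ek : wm k = u.
    apply: hmin => //; apply/hJ; apply/existsP; exists k; exact: lepm_refl.
  exists k; split => // k' hk'; rewrite ek; apply: hmin.
    by apply/hJ; apply/existsP; exists k'; exact: lepm_refl.
  by rewrite -ek.
move=> [k [-> hk]]; split.
  by apply/hJ; apply/existsP; exists k; exact: lepm_refl.
move=> v /hJ /existsP [k' hk'] hv; apply: lem_anti => //.
by rewrite -(hk k' (lem_trans hk' hv)).
Qed.

Lemma wm_le_cases (k k' : nat) : (k < n)%N -> (k' < n)%N -> lem (wm k') (wm k) ->
  k' = k \/ [/\ (k < k')%N, k' = n.-1 & forall q, (k < q < n)%N -> Ak q = 0%N].
Proof.
move=> kn k'n /lemP h.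
case: (ltngtP k' k) => hkk; [exfalso| |by left].
  have := h k' (ltnW k'n); rewrite !cu_wm ?(ltnW k'n) // hkk ltnn eqxx.
  have -> : (k' < n.-1)%N by lia.
  lia.
right; have hk' : k' = n.-1.
  apply/eqP; rewrite eqn_leq -ltnS prednK ?k'n /=; last by lia.
  rewrite leqNgt; apply/negP => hlt.
  have := h k' (ltnW k'n); rewrite !cu_wm ?(ltnW k'n) // ltnn eqxx hlt ltnNge (ltnW hkk) /=.
  by rewrite gtn_eqF //; lia.
split => // q /andP [kq qn].
have := h q (ltnW qn); rewrite !cu_wm ?(ltnW qn) //.
have -> : (q < k)%N = false by lia.
have -> : (q == k) = false by apply/eqP; lia.
rewrite hk'; case: (ltngtP q n.-1) => hq; try lia.
by rewrite hq ltnn addn0; lia.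
Qed.

Lemma wm_le_last (k : nat) : (k < n)%N -> (forall q, (k < q < n)%N -> Ak q = 0%N) ->
  lem (wm n.-1) (wm k).
Proof.
move=> kn hq; apply/lemP => i hi; rewrite !cu_wm // ltnn addn0.
case: (ltngtP i k) => hik.
- by have -> : (i < n.-1)%N by lia.
- case: (ltngtP i n.-1) => hin //.
  + by rewrite hq //; lia.
  + by rewrite hq //; lia.
- rewrite hik; case: (ltngtP k n.-1) => hkn //; first exact: leq_addr.
  by rewrite hkn addn0.
Qed.
Lemma dims_from_hilb (I : S -> Prop) D h : hilbfun_is I D h ->
  h = size (Bp (predC inL) D) -> dim_is (piece I D) (size (Bp inL D)).
Proof.
move=> [dS [dI [hS [hI ->]]]] e.
have eS := dim_unique hS (dim_homog D).
have hle : (dI <= dS)%N.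
  case: hI => [[s [hs [hsV hli]]] _]; rewrite -hs; apply: (proj2 hS) => //.
  by move=> i hi; case: (hsV i hi).
have e2 : dI = size (Bp inL D).
  move: e; rewrite eS size_Bp_split in hle *; lia.
by rewrite -e2.
Qed.

Lemma selected_iff (I : S -> Prop) D0 : (0 < n)%N ->
  (forall D, (D0 <= D)%N -> dim_is (piece I D) (size (Bp inL D))) ->
  forall u : mon, (D0 <= mdeg u)%N -> (lex_selected I u <-> inL u).
Proof.
move=> n0 hd u hu; split.
  move=> [D' [hD' hr]]; have e := dim_unique hD' (hd _ hu); subst D'.
  case: (boolP (inL u)) => // hn; have := lexrank_notinL n0 hn; rewrite ltnNge hr //.
move=> hL; exists (size (Bp inL (mdeg u))); split; first exact: hd.
exact: lexrank_inL.
Qed.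

Lemma lem_mdeg (w m : mon) : lem w m -> (mdeg w <= mdeg m)%N.
Proof. by move=> h; rewrite -(submK h) mdegD leq_addl. Qed.

Lemma ltA_shift (m : mon) c : ltAc m -> ltAc (U_(ord_max) *+ c + m)%MM.
Proof.
move=> [k [kn hj hk]]; exists k.
have hc : forall j, (j < n)%N -> cu (U_(ord_max) *+ c + m)%MM j = cu m j.
  move=> j jn; have jn' : (j <= n)%N by apply: ltnW.
  rewrite -!cu_inord // mnmDE mulmnE mnm1E.
  rewrite -val_eqE /= inordK //.
  have -> : (n == j) = false by apply/eqP => h; move: jn; rewrite -h ltnn.
  by rewrite mul0n.
split => //.
- by move=> j jk; rewrite hc ?hj //; apply: ltn_trans jk kn.
- by rewrite hc.
Qed.

Lemma lexsat_iff (I : S -> Prop) D0 : (0 < n)%N ->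
  (forall D, (D0 <= D)%N -> dim_is (piece I D) (size (Bp inL D))) ->
  forall f : S, lexsat I f <-> Lideal a f.
Proof.
move=> n0 hd f; split.
  move=> [j [j1 hj]]; apply/LidealP => m hm.
  pose w : mon := (U_(ord_max) *+ D0 + U_(ord_max) *+ j)%MM.
  have hg : maxpow j ('X_[U_(ord_max) *+ D0] * 'X_[U_(ord_max) *+ j] : S).
    exists [:: ('X_[U_(ord_max) *+ D0], 'X_[U_(ord_max) *+ j])]; split.
      move=> p; rewrite inE => /eqP -> /=; exists (U_(ord_max) *+ j)%MM; split => //.
      by rewrite mdegMn mdeg1 mul1n.
    by rewrite big_seq1.
  have := hj _ hg; rewrite -mpolyXD -/w => hsel.
  have hwm : (w + m)%MM \in msupp (f * 'X_[w]) by rewrite mcoeff_msupp mcoeffMX -mcoeff_msupp.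
  have hdeg : (D0 <= mdeg (w + m)%MM)%N.
    by rewrite !mdegD !mdegMn mdeg1 !mul1n -addnA leq_addr.
  have := (proj1 (selected_iff n0 hd hdeg)) (hsel _ hwm).
  apply: contraLR => hn; apply/negP => h; have := (proj1 (inLP _ n0)) h; apply.
  rewrite /w -addmA; apply: ltA_shift; apply: ltA_shift; exact: notinL_ltA.
move=> hf; exists (maxn 1 D0); split; first exact: leq_maxl.
move=> g hg u hu.
have hfg : Lideal a (f * g) by rewrite mulrC; apply: ideal_gen_mul.
have hmg : maxpow (maxn 1 D0) (f * g) by apply: ideal_gen_mul.
have [w hw hwu] := @ideal_gen_supp _ (fun w : mon => mdeg w = maxn 1 D0) _
   (fun g (h : exists m : mon, mdeg m = maxn 1 D0 /\ g = 'X_[m]) =>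
      let: ex_intro m (conj h1 h2) := h in ex_intro2 _ _ m h1 h2) hmg u hu.
apply/(selected_iff n0 hd); last by apply/(proj1 (LidealP _)) : hu.
by apply: leq_trans (lem_mdeg hwu); rewrite hw leq_maxr.
Qed.
Definition Cmin (k : nat) : Prop := forall k' : 'I_n, lem (wm k') (wm k) -> wm k' = wm k.

Lemma Cmin_ii (p : nat) : (p < n.-1)%N -> (0 < Ak p)%N ->
  (forall q, (p < q < n)%N -> Ak q = 0%N) ->
  forall k, (k < n)%N -> (Cmin k <-> ((k < p)%N \/ k = n.-1)).
Proof.
move=> pn hp hq k kn; split.
  move=> hC; case: (ltnP k p) => hkp; first by left.
  case: (ltngtP k n.-1) => hkn; last by right.
    exfalso; have hn1 : (n.-1 < n)%N by lia.
    have hz : forall q, (k < q < n)%N -> Ak q = 0%N.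
      by move=> q /andP [h1 h2]; apply: hq; apply/andP; split => //; lia.
    have h := hC (Ordinal hn1) (wm_le_last kn hz); move: h; rewrite /= => h.
    have := congr1 (fun u => cu u k) h; rewrite !cu_wm; try lia.
    rewrite hkn ltnn eqxx; lia.
  by lia.
move=> hk k' /(wm_le_cases kn (ltn_ord k')) [-> //|[h1 h2 h3]].
exfalso; case: hk => hk.
  have hh : (k < p < n)%N by apply/andP; split; lia.
  by have := h3 p hh; lia.
by lia.
Qed.

Lemma Cmin_all : (0 < Ak n.-1)%N -> forall k, (k < n)%N -> Cmin k.
Proof.
move=> ha k kn k' /(wm_le_cases kn (ltn_ord k')) [-> //|[h1 h2 h3]].
exfalso; have := h3 n.-1; have -> : (k < n.-1 < n)%N by apply/andP; split; lia.
move=> /(_ isT); lia.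
Qed.

End Mono.
Lemma ideal_gen_ext (K : fieldType) (n : nat) (G1 G2 : {mpoly K[n.+1]} -> Prop) f :
  (forall g, G1 g <-> G2 g) -> (ideal_gen G1 f <-> ideal_gen G2 f).
Proof.
move=> h; split => -[s [hs ->]]; exists s; split => // p hp; apply/h; exact: hs.
Qed.

Lemma mpolyX_inj (K : fieldType) (n : nat) (u w : 'X_{1..n.+1}) :
  'X_[K, u] = 'X_[K, w] -> u = w.
Proof. by move=> h; have := congr1 (@msupp _ _) h; rewrite !msuppX => -[]. Qed.

Lemma adiff_gt d e j : (d < j)%N -> adiff d e j = 0%N.
Proof. move=> h; rewrite /adiff /eext; have -> : (j <= d)%N = false by lia. by have -> : (j.+1 <= d)%N = false by lia. Qed.

Lemma gens_equiv (K : fieldType) (n d : nat) (a : nat -> nat) :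
  (d < n)%N -> (forall j, (d < j)%N -> a j = 0%N) ->
  forall g : {mpoly K[n.+1]}, (exists2 k, (k < n)%N & g = Lgen a k) <-> explicit_gens d a g.
Proof.
move=> dn ha g; split.
  move=> [k kn ->].
  case: (ltnP k (n - d.+1)) => hk; first by left; exists k => //; rewrite (@Lgen_xv K n a d dn ha k hk).
  case: (ltnP k n.-1) => hk2.
    right; left; exists (k - (n - d.+1))%N; first by lia.
    rewrite -(@Lgen_mid K n a d dn ha); last by lia.
    by rewrite subnKC.
  right; right; have -> : k = n.-1 by lia.
  exact: (@Lgen_last K n a d dn ha).
case=> [[j jb ->]|[[k kd ->]|->]].
- by exists j; [lia|rewrite (@Lgen_xv K n a d dn ha j jb)].
- by exists (n - d.+1 + k)%N; [lia|rewrite (@Lgen_mid K n a d dn ha k kd)].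
- by exists n.-1; [lia|rewrite (@Lgen_last K n a d dn ha)].
Qed.
Theorem lemma3p3 (K : closedFieldType) (d n : nat) (e : nat -> nat) :
  (forall i, (i < d)%N -> (e i.+1 <= e i)%N) -> (0 < e d)%N -> (d < n)%N ->
  (* L^P_n is well defined: some homogeneous ideal has Hilbert polynomial P *)
  (exists I : {mpoly K[n.+1]} -> Prop, homog_ideal I /\ has_hilb_poly I (hilbP d e)) /\
  (forall I : {mpoly K[n.+1]} -> Prop,
    homog_ideal I -> has_hilb_poly I (hilbP d e) ->
    (* (i) *)
    (forall f : {mpoly K[n.+1]}, lexsat I f <-> Lideal (adiff d e) f) /\
    (forall f : {mpoly K[n.+1]}, Lideal (adiff d e) f <-> ideal_gen (explicit_gens d (adiff d e)) f) /\
    (* (ii) *)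
    (forall l, (l < d)%N -> (forall j, (j <= l)%N -> adiff d e j = 0%N) ->
       (0 < adiff d e l.+1)%N ->
       forall u : 'X_{1..n.+1},
         min_mon_gen (lexsat I) u <->
         [\/ exists2 j, (j < n - d.+1)%N & 'X_[K, u] = xv j,
             exists2 k, (k + l.+2 <= d)%N & 'X_[K, u] = midgen d (adiff d e) k
           | 'X_[K, u] = lastgen d (adiff d e) (d - l.+1)%N]) /\
    (adiff d e 0 != 0%N ->
       forall u : 'X_{1..n.+1},
         min_mon_gen (lexsat I) u <-> explicit_gens d (adiff d e) 'X_[K, u])).
Proof.
move=> he ed dn.
have ha : forall j, (d < j)%N -> adiff d e j = 0%N by move=> j h; exact: adiff_gt.
set a := adiff d e in ha *.
have n0 : (0 < n)%N by lia.
have hQ : forall D, (e 0 <= D)%N -> ((size (@Bp n (predC (@inL n a)) D))%:R : rat) = hilbP d e D%:R.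
  by move=> D hD; rewrite (size_BpC _ _ n0) QC_hilbP.
have hLhilb : forall D, hilbfun_is (Lideal a : {mpoly K[n.+1]} -> Prop) D (size (@Bp n (predC (@inL n a)) D)).
  move=> D; exists (size (@Bp n predT D)), (size (@Bp n (@inL n a) D)); split; first exact: dim_homog.
  split; first exact: dim_pieceL.
  by rewrite (@size_Bp_split n a D) addKn.
split.
  exists (Lideal a); split; first exact: Lideal_homog.
  exists (e 0) => i hi; exists (size (@Bp n (predC (@inL n a)) i)); split; [exact: hLhilb|exact: hQ].
move=> I hI [i0 hP].
have hd : forall D, (maxn i0 (e 0) <= D)%N -> dim_is (piece I D) (size (@Bp n (@inL n a) D)).
  move=> D hD; have [h [hh hr]] := hP D (leq_trans (leq_maxl _ _) hD).
  apply: (dims_from_hilb hh); apply/eqP; rewrite -(eqr_nat rat) hr hQ //.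
  exact: leq_trans (leq_maxr _ _) hD.
have hsat := lexsat_iff n0 hd.
have hJ : forall v, lexsat I 'X_[v] <-> @inL n a v.
  move=> v; split.
    by move=> /hsat /LidealP h; apply: h; rewrite msuppX mem_head.
  by move=> h; apply/hsat/LidealP => m; rewrite msuppX inE => /eqP ->.
have hmin := mingen_iff hJ.
split; first exact: hsat.
split; first by move=> f; apply: ideal_gen_ext; apply: gens_equiv.
split.
  move=> l ld hl0 hl1 u; rewrite hmin.
  set p := (n - l.+2)%N.
  have hAp : (0 < Ak n a p)%N by rewrite /Ak; have -> : (n.-1 - p = l.+1)%N by lia.
  have hAq : forall q, (p < q < n)%N -> Ak n a q = 0%N.
    by move=> q /andP [h1 h2]; rewrite /Ak hl0 //; lia.
  have hpn : (p < n.-1)%N by lia.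
  have hC := Cmin_ii hpn hAp hAq.
  split.
    move=> [k [-> hk]]; have := (proj1 (hC k (ltn_ord k))) hk; case => hk'.
      case: (ltnP k (n - d.+1)) => hkb.
        constructor 1; exists k => //.
        by rewrite -(Lgen_wm K a (ltn_ord k)) (@Lgen_xv K n a d dn ha k hkb).
      constructor 2; exists (k - (n - d.+1))%N; first by lia.
      rewrite -(@Lgen_mid K n a d dn ha); last by lia.
      by rewrite subnKC // Lgen_wm.
    constructor 3; rewrite -(@lastgen_trunc K n a d l ld hl0) -(@Lgen_last K n a d dn ha).
    by rewrite hk' Lgen_wm //; lia.
  case=> [[j jb hj]|[k hk hX]|hX].
  - have jn : (j < n)%N by lia.
    exists (Ordinal jn); split.
      by apply: (@mpolyX_inj K); rewrite hj -(@Lgen_xv K n a d dn ha j jb) Lgen_wm.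
    by apply/(hC j jn); left; lia.
  - have kn : (n - d.+1 + k < n)%N by lia.
    exists (Ordinal kn); split.
      apply: (@mpolyX_inj K); rewrite hX -(@Lgen_mid K n a d dn ha k) ?Lgen_wm //; lia.
    by apply/(hC _ kn); left; lia.
  - have kn : (n.-1 < n)%N by lia.
    exists (Ordinal kn); split.
      apply: (@mpolyX_inj K); rewrite hX -(@lastgen_trunc K n a d l ld hl0).
      by rewrite -(@Lgen_last K n a d dn ha) Lgen_wm.
    by apply/(hC _ kn); right.
move=> ha0 u; rewrite hmin -gens_equiv //.
have hall : forall k, (k < n)%N -> Cmin n a k.
  apply: Cmin_all; rewrite /Ak subnn lt0n //.
split.
  by move=> [k [-> _]]; exists k => //; rewrite Lgen_wm.
move=> [k kn hk]; exists (Ordinal kn); split; last exact: hall.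
by apply: (@mpolyX_inj K); rewrite hk Lgen_wm.
Qed.
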